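(* The set $\{\ket{\psi_{00}},\ket{\psi_{02}},\ket{\psi_{20}},\ket{\psi_{22}}\}$ of generalized Bell states in $\mathbb{C}^4\otimes\mathbb{C}^4$ is perfectly distinguishable by one-way LOCC using only projective measurements.
   Context: Generalized Bell states in $\mathbb{C}^4\otimes\mathbb{C}^4$ (Alice holds the first factor, Bob the second): $\ket{\psi_{nm}}=\frac12\sum_{j=0}^{3}e^{2\pi i jn/4}\ket{j}_A\ket{j\oplus_4 m}_B$ for $n,m\in\{0,1,2,3\}$, where $j\oplus_4 m=(j+m)\bmod 4$. Perfect distinguishability by one-way LOCC using only projective measurements means: one party performs a projective measurement on her subsystem, communicates the outcome classically, and the other party then performs a projective measurement (depending on that outcome) whose result identifies with certainty which state of the set was shared. *)

(* Defs.v *)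
From mathcomp Require Import all_boot all_order all_algebra all_field.
Set Implicit Arguments. Unset Strict Implicit. Unset Printing Implicit Defensive.
Import Order.TTheory GRing.Theory Num.Theory.
Local Open Scope ring_scope.

Definition adjmx (d : nat) (A : 'M[algC]_d) : 'M[algC]_d :=
  map_mx (fun x => x^*) A^T.

Definition is_proj_meas (d m : nat) (P : 'I_m -> 'M[algC]_d) : Prop :=
  (forall a, P a *m P a = P a /\ adjmx (P a) = P a) /\
  \sum_(a < m) P a = 1%:M.

(* A bipartite pure state in C^dA (x) C^dB is encoded by its coefficient
   matrix Psi : |Psi> = sum_{j,k} Psi j k |j>_A |k>_B.
   bprob Psi P Q = <Psi| P (x) Q |Psi>. *)
Definition bprob (dA dB : nat) (Psi : 'M[algC]_(dA, dB))
  (P : 'M[algC]_dA) (Q : 'M[algC]_dB) : algC :=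
  \sum_(j < dA) \sum_(k < dB) \sum_(j' < dA) \sum_(k' < dB)
    (Psi j k)^* * P j j' * Q k k' * Psi j' k'.

(* One-way LOCC, Alice measures first, Bob's measurement depends on Alice's
   outcome; guess a b identifies the state with certainty: every outcome
   pair of nonzero probability for state i leads to the guess i. *)
Definition oneway_AtoB (N dA dB : nat) (psi : 'I_N -> 'M[algC]_(dA, dB)) : Prop :=
  exists (m n : nat) (P : 'I_m -> 'M[algC]_dA) (Q : 'I_m -> 'I_n -> 'M[algC]_dB)
         (guess : 'I_m -> 'I_n -> 'I_N),
    is_proj_meas P /\ (forall a, is_proj_meas (Q a)) /\
    forall i a b, bprob (psi i) (P a) (Q a b) != 0 -> guess a b = i.

Definition oneway_BtoA (N dA dB : nat) (psi : 'I_N -> 'M[algC]_(dA, dB)) : Prop :=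
  exists (m n : nat) (Q : 'I_m -> 'M[algC]_dB) (P : 'I_m -> 'I_n -> 'M[algC]_dA)
         (guess : 'I_m -> 'I_n -> 'I_N),
    is_proj_meas Q /\ (forall a, is_proj_meas (P a)) /\
    forall i a b, bprob (psi i) (P a b) (Q a) != 0 -> guess a b = i.

Definition oneway_proj_distinguishable (N dA dB : nat)
  (psi : 'I_N -> 'M[algC]_(dA, dB)) : Prop :=
  oneway_AtoB psi \/ oneway_BtoA psi.

(* Generalized Bell state psi_{nm} in C^4 (x) C^4:
   (1/2) sum_j e^{2 pi i j n/4} |j> |j+m mod 4>, with e^{2 pi i jn/4} = i^(jn). *)
Definition bell (n m : nat) : 'M[algC]_(4, 4) :=
  \matrix_(j < 4, k < 4)
    (if (k : nat) == ((j + m) %% 4)%N then 2^-1 * 'i ^+ (j * n) else 0).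

Definition bell_set : 'I_4 -> 'M[algC]_(4, 4) :=
  fun i => tnth [tuple bell 0 0; bell 0 2; bell 2 0; bell 2 2] i.

(* Main.v *)
Require Import Defs.
From mathcomp Require Import all_boot all_order all_algebra all_field.
From mathcomp Require Import ring.
Import Order.TTheory GRing.Theory Num.Theory.
Local Open Scope ring_scope.

Fixpoint md4 (x : nat) : nat :=
  match x with 0 => 0 | 1 => 1 | 2 => 2 | 3 => 3 | S (S (S (S y))) => md4 y end.
Lemma md4E x : (x %% 4 = md4 x)%N.
Proof.
elim/ltn_ind: x => -[|[|[|[|x]]]] IH //=.
rewrite -(IH x) // ltnS; do 3 apply: leqW; exact: leqnn.
Qed.

Definition hb (x : nat) : nat := match x with 0 => 0 | 1 => 0 | _ => 1 end.
Definition lb (x : nat) : bool := match x with 0 => false | 1 => true | 2 => false | _ => true end.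
Definition u (a j : nat) : algC :=
  if hb j == hb a then (if lb a && lb j then -1 else 1) else 0.

Definition yv (Psi : 'M[algC]_(4,4)) (a b : nat) : algC :=
  \sum_(j < 4) \sum_(k < 4) u a j * u b k * Psi j k.

Lemma bellpow j : 'i ^+ (j * 2) = (-1) ^+ odd j :> algC.
Proof. by rewrite mulnC exprM sqrCi signr_odd. Qed.


Lemma conj_u a j : (u a j)^* = u a j.
Proof. by rewrite /u; case: ifP => _; [case: ifP => _|]; rewrite ?rmorphN ?rmorph1 ?rmorph0. Qed.

Definition PP (a : 'I_4) : 'M[algC]_4 := \matrix_(j, k) (2^-1 * (u a j * u a k)).

Definition i0 : 'I_4 := @Ordinal 4 0 isT.
Definition i1 : 'I_4 := @Ordinal 4 1 isT.
Definition i2 : 'I_4 := @Ordinal 4 2 isT.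
Definition i3 : 'I_4 := @Ordinal 4 3 isT.

Definition guess (a b : 'I_4) : 'I_4 :=
  if hb a == hb b then (if lb a == lb b then i0 else i2)
  else (if lb a == lb b then i1 else i3).

Lemma bprob_fact Psi a b :
  bprob Psi (PP a) (PP b) =
  2^-1 * 2^-1 * (\sum_(j < 4) \sum_(k < 4) (Psi j k)^* * u a j * u b k) * yv Psi a b.
Proof.
rewrite /bprob /yv -mulrA big_distrl mulr_sumr; apply: eq_bigr => j _.
rewrite big_distrl mulr_sumr; apply: eq_bigr => k _.
rewrite /=.
rewrite !mulr_sumr; apply: eq_bigr => j' _.
rewrite !mulr_sumr; apply: eq_bigr => k' _.
rewrite !mxE; ring.
Qed.

Lemma two_neq0 : (2 : algC) != 0.
Proof. by rewrite pnatr_eq0. Qed.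

Lemma PP_meas : is_proj_meas PP.
Proof.
split.
  move=> a; split.
    apply/matrixP => j k; rewrite !mxE !big_ord_recr big_ord0 /= !mxE.
    case: a => [[|[|[|[|?]]]] //= Ha]; rewrite /u /=; by field.
  apply/matrixP => j k; rewrite !mxE rmorphM fmorphV /= rmorphM /= !conj_u rmorph_nat.
  by rewrite (mulrC (u a j)).
apply/matrixP => j k; rewrite summxE !big_ord_recr big_ord0 /= !mxE.
case: j => [[|[|[|[|?]]]] //= Hj]; case: k => [[|[|[|[|?]]]] //= Hk];
  rewrite /u /=; by field.
Qed.

Theorem theorem8 : oneway_proj_distinguishable bell_set.
Proof.
left; exists 4%N, 4%N, PP, (fun _ => PP), guess.
split; first exact: PP_meas.
split; first by move=> _; exact: PP_meas.
move=> i a b; apply: contraTeq => Hg; apply/negPn/eqP.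
rewrite bprob_fact; apply/eqP; rewrite mulf_eq0; apply/orP; right; apply/eqP.
move: Hg.
case: i => [[|[|[|[|?]]]] //= Hi]; case: a => [[|[|[|[|?]]]] //= Ha];
  case: b => [[|[|[|[|?]]]] //= Hb] => _;
  rewrite /yv !big_ord_recr !big_ord0 /= !mxE !md4E ?bellpow /u /=;
  rewrite ?expr0 ?expr1 ?muln0 ?expr0; ring.
Qed.
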